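(* Let $n$ be a positive integer, let $T_d\in\mathbb{R}^{n\times n}$ be a symmetric positive definite matrix (in the application, a $d$-level Toeplitz matrix), and let $D_d\in\mathbb{R}^{n\times n}$ be a diagonal matrix with nonnegative diagonal entries. Consider the real non-symmetric positive definite block linear system $\mathcal{R}_d x=f$ with $$\mathcal{R}_d=\begin{bmatrix} I & T_d-D_d\\ D_d-T_d & I\end{bmatrix}\in\mathbb{R}^{2n\times 2n},$$ and its splitting $\mathcal{R}_d=\mathcal{T}_d+\mathcal{D}_d$ with $$\mathcal{T}_d=\begin{bmatrix} 0 & T_d\\ -T_d & 0\end{bmatrix},\qquad \mathcal{D}_d=\begin{bmatrix} I & -D_d\\ D_d & I\end{bmatrix}.$$ Let $\omega>0$. For an arbitrary initial vector $x^{(0)}\in\mathbb{R}^{2n}$, define the iteration (the TBAN iteration) $$(\omega I+\mathcal{T}_d)x^{(k+\frac12)}=(\omega I-\mathcal{D}_d)x^{(k)}+f,\qquad (\omega I+\mathcal{D}_d)x^{(k+1)}=(\omega I-\mathcal{T}_d)x^{(k+\frac12)}+f,\quad k=0,1,2,\dots$$ Then the sequence $\{x^{(k)}\}_{k\ge0}$ converges to the unique solution of $\mathcal{R}_d x=f$. Moreover, with $$\mathcal{F}_{d,\omega}=\tfrac{1}{2\omega}(\omega I+\mathcal{T}_d)(\omega I+\mathcal{D}_d),\quad \mathcal{G}_{d,\omega}=\tfrac{1}{2\omega}(\omega I-\mathcal{T}_d)(\omega I-\mathcal{D}_d),\quad \mathcal{L}_{d,\omega}=\mathcal{F}_{d,\omega}^{-1}\mathcal{G}_{d,\omega},$$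 the spectral radius of the iteration matrix satisfies $$\rho(\mathcal{L}_{d,\omega})\le \sigma(\omega)<1\quad\text{for all }\omega>0,\qquad \sigma(\omega)=\sqrt{\frac{(\omega-1)^2+\lambda_{\max}^2}{(\omega+1)^2+\lambda_{\max}^2}},$$ where $\lambda_{\max}$ is the maximum diagonal entry of $D_d$.
   Context: This arises from writing a complex linear system $(D_d-T_d+\imath I)\mathbf{u}=\mathbf{b}$ with $\mathbf{u}=y+\imath z$, $\mathbf{b}=p+\imath q$ in real form, $x=[z;y]$, $f=[-p;q]$. Here $I$ denotes identity matrices of the appropriate size and $\rho(\cdot)$ is the spectral radius. *)

(* Defs.v *)
From mathcomp Require Import all_boot all_order all_algebra.
From mathcomp Require Import all_classical all_reals all_analysis.
From mathcomp Require Import complex.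
Set Implicit Arguments. Unset Strict Implicit. Unset Printing Implicit Defensive.
Import Order.TTheory GRing.Theory Num.Theory numFieldNormedType.Exports.
Local Open Scope ring_scope.
Local Open Scope classical_set_scope.

Definition spectral_radius (R : realType) (m : nat) (A : 'M[R]_m) : R :=
  sup ((@Normc.normc R) @`
         [set l : R[i] | eigenvalue (map_mx (fun r : R => (r%:C)%C) A) l]).

Definition spd (R : realType) (n : nat) (T : 'M[R]_n) : Prop :=
  T^T = T /\ (forall v : 'cV[R]_n, v != 0 -> 0 < (v^T *m T *m v) 0 0).

Definition Rblk (R : realType) (n : nat) (T D : 'M[R]_n) : 'M[R]_(n + n) :=
  block_mx 1%:M (T - D) (D - T) 1%:M.
Definition Tblk (R : realType) (n : nat) (T : 'M[R]_n) : 'M[R]_(n + n) :=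
  block_mx 0 T (- T) 0.
Definition Dblk (R : realType) (n : nat) (D : 'M[R]_n) : 'M[R]_(n + n) :=
  block_mx 1%:M (- D) D 1%:M.

Definition Fmat (R : realType) (n : nat) (T D : 'M[R]_n) (w : R) : 'M[R]_(n + n) :=
  (2 * w)^-1 *: ((w%:M + Tblk T) *m (w%:M + Dblk D)).
Definition Gmat (R : realType) (n : nat) (T D : 'M[R]_n) (w : R) : 'M[R]_(n + n) :=
  (2 * w)^-1 *: ((w%:M - Tblk T) *m (w%:M - Dblk D)).
Definition Lmat (R : realType) (n : nat) (T D : 'M[R]_n) (w : R) : 'M[R]_(n + n) :=
  invmx (Fmat T D w) *m Gmat T D w.

Definition tban_half (R : realType) (n : nat) (T D : 'M[R]_n) (w : R)
  (f x : 'cV[R]_(n + n)) : 'cV[R]_(n + n) :=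
  invmx (w%:M + Tblk T) *m ((w%:M - Dblk D) *m x + f).
Definition tban_step (R : realType) (n : nat) (T D : 'M[R]_n) (w : R)
  (f x : 'cV[R]_(n + n)) : 'cV[R]_(n + n) :=
  invmx (w%:M + Dblk D) *m ((w%:M - Tblk T) *m tban_half T D w f x + f).
Definition tban_seq (R : realType) (n : nat) (T D : 'M[R]_n) (w : R)
  (f x0 : 'cV[R]_(n + n)) (k : nat) : 'cV[R]_(n + n) :=
  iter k (tban_step T D w f) x0.

(* lambda_max: maximum diagonal entry of D (n > 0 and entries are >= 0,
   so starting the fold at 0 is harmless). *)
Definition lambda_max (R : realType) (n : nat) (D : 'M[R]_n) : R :=
  \big[Num.max/0]_(i < n) D i i.

Definition sigma (R : realType) (lmax w : R) : R :=
  Num.sqrt (((w - 1) ^+ 2 + lmax ^+ 2) / ((w + 1) ^+ 2 + lmax ^+ 2)).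

(* Main.v *)
Require Import Defs.
From mathcomp Require Import all_boot all_order all_algebra.
From mathcomp Require Import all_classical all_reals all_analysis.
From mathcomp Require Import complex.
From mathcomp Require Import ring lra.
Set Implicit Arguments. Unset Strict Implicit. Unset Printing Implicit Defensive.
Import Order.TTheory GRing.Theory Num.Theory numFieldNormedType.Exports.
Local Open Scope ring_scope.
Local Open Scope classical_set_scope.
Section Basic.
Variable R : realType.

Definition Nn (m : nat) (v : 'cV[R]_m) : R := \sum_i v i 0 ^+ 2.

Lemma Nn_ge0 m (v : 'cV[R]_m) : 0 <= Nn v.
Proof. by apply: sumr_ge0 => i _; rewrite sqr_ge0. Qed.

Lemma Nn_tr m (v : 'cV[R]_m) : Nn v = (v^T *m v) 0 0.
Proof. by rewrite /Nn mxE; apply: eq_bigr => i _; rewrite mxE expr2. Qed.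

Lemma Nn_coord m (v : 'cV[R]_m) i : v i 0 ^+ 2 <= Nn v.
Proof.
rewrite /Nn (bigD1 i) //= lerDl; apply: sumr_ge0 => j _; exact: sqr_ge0.
Qed.

Lemma Nn_eq0 m (v : 'cV[R]_m) : Nn v = 0 -> v = 0.
Proof.
move=> h; apply/matrixP => i j; rewrite (ord1 j) mxE.
have := Nn_coord v i; rewrite h => h2.
have : v i 0 ^+ 2 = 0 by apply/eqP; rewrite eq_le h2 sqr_ge0.
by move/eqP; rewrite sqrf_eq0 => /eqP.
Qed.

Lemma Nn_N m (v : 'cV[R]_m) : Nn (- v) = Nn v.
Proof. by apply: eq_bigr => i _; rewrite mxE sqrrN. Qed.

Lemma skew0 m (S : 'M[R]_m) (v : 'cV[R]_m) : S^T = - S ->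
  (v^T *m (S *m v)) 0 0 = 0.
Proof.
move=> hS; set s := (v^T *m (S *m v)).
have : s^T = - s by rewrite /s !trmx_mul trmxK hS mulmxN mulNmx mulmxA.
move/matrixP/(_ 0 0); rewrite !mxE => h.
lra.
Qed.

Lemma Nn_add m (u v : 'cV[R]_m) :
  Nn (u + v) = Nn u + 2 * (u^T *m v) 0 0 + Nn v.
Proof.
rewrite /Nn mxE mulr_sumr -!big_split /=; apply: eq_bigr => i _.
by rewrite !mxE; ring.
Qed.

Lemma Nn_scale m a (v : 'cV[R]_m) : Nn (a *: v) = a ^+ 2 * Nn v.
Proof. by rewrite /Nn mulr_sumr; apply: eq_bigr => i _; rewrite mxE exprMn. Qed.

Lemma Nn_skew m (S : 'M[R]_m) a (v : 'cV[R]_m) : S^T = - S ->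
  Nn ((a%:M + S) *m v) = a ^+ 2 * Nn v + Nn (S *m v).
Proof.
move=> hS; rewrite mulmxDl mul_scalar_mx Nn_add Nn_scale.
have -> : (a *: v)^T = a *: v^T by apply/matrixP=> i j; rewrite !mxE.
rewrite -scalemxAl mxE skew0 //. by rewrite !mulr0 addr0.
Qed.
End Basic.
Section Dpart.
Variable R : realType.
Variable n : nat.
Implicit Types (D T : 'M[R]_n) (x : 'cV[R]_(n + n)).

Lemma diag_mul D (u : 'cV[R]_n) i : is_diag_mx D -> (D *m u) i 0 = D i i * u i 0.
Proof. by case/diag_mxP => d ->; rewrite mul_diag_mx !mxE eqxx mulr1n. Qed.

Lemma Dblk_block D a b : a%:M + b *: Dblk D =
  block_mx ((a+b)%:M) (- (b *: D)) (b *: D) ((a+b)%:M).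
Proof.
rewrite /Dblk scalar_mx_block scale_block_mx add_block_mx !scalemx1.
by rewrite !add0r scalerN -!raddfD.
Qed.

Lemma Dblk_entries D a b x i : is_diag_mx D ->
  ((a%:M + b *: Dblk D) *m x) (lshift n i) 0 =
     (a + b) * x (lshift n i) 0 - b * D i i * x (rshift n i) 0 /\
  ((a%:M + b *: Dblk D) *m x) (rshift n i) 0 =
     b * D i i * x (lshift n i) 0 + (a + b) * x (rshift n i) 0.
Proof.
move=> hD; rewrite Dblk_block.
have e1 : x (lshift n i) 0 = usubmx x i 0 by rewrite mxE.
have e2 : x (rshift n i) 0 = dsubmx x i 0 by rewrite mxE.
rewrite e1 e2; set u := usubmx x; set v := dsubmx x.
rewrite -[x]vsubmxK -/u -/v mul_block_col col_mxEu col_mxEd.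
rewrite !mul_scalar_mx mulNmx -!scalemxAl.
set Du := D *m u; set Dv := D *m v.
rewrite !mxE.
have s1 : \sum_j D i j * v j 0 = D i i * x (rshift n i) 0.
  by rewrite e2 -diag_mul // mxE.
have s2 : \sum_j D i j * u j 0 = D i i * x (lshift n i) 0.
  by rewrite e1 -diag_mul // mxE.
rewrite s1 s2; split; ring.
Qed.

Lemma Nn_split x : Nn x = \sum_(i < n) (x (lshift n i) 0 ^+ 2 + x (rshift n i) 0 ^+ 2).
Proof. by rewrite /Nn big_split_ord big_split. Qed.

Lemma Nn_Dblk D a b x : is_diag_mx D ->
  Nn ((a%:M + b *: Dblk D) *m x) =
  \sum_(i < n) (((a + b) ^+ 2 + b ^+ 2 * D i i ^+ 2) *
                (x (lshift n i) 0 ^+ 2 + x (rshift n i) 0 ^+ 2)).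
Proof.
move=> hD; rewrite Nn_split; apply: eq_bigr => i _.
case: (Dblk_entries a b x i hD) => -> ->; ring.
Qed.

End Dpart.
Section Dineq.
Variable R : realType.
Variable n : nat.
Implicit Types (D T : 'M[R]_n) (x : 'cV[R]_(n + n)).

Definition s2 (lm w : R) := ((w - 1) ^+ 2 + lm ^+ 2) / ((w + 1) ^+ 2 + lm ^+ 2).

Lemma Dblk_le D w lm x : is_diag_mx D -> (forall i, 0 <= D i i <= lm) -> 0 < w ->
  Nn ((w%:M - Dblk D) *m x) <= s2 lm w * Nn ((w%:M + Dblk D) *m x).
Proof.
move=> hD hb hw.
have -> : w%:M - Dblk D = w%:M + (-1) *: Dblk D by rewrite scaleN1r.
have -> : w%:M + Dblk D = w%:M + 1 *: Dblk D by rewrite scale1r.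
rewrite !Nn_Dblk // mulr_sumr; apply: ler_sum => i _.
have /andP[d0 d1] := hb i.
set q := (x (lshift n i) 0 ^+ 2 + x (rshift n i) 0 ^+ 2); set d := D i i.
have q0 : 0 <= q by rewrite /q addr_ge0 // sqr_ge0.
have B0 : 0 < (w + 1) ^+ 2 + lm ^+ 2.
  by have := sqr_ge0 lm; nra.
rewrite /s2 [X in _ <= X]mulrAC ler_pdivlMr //.
have hd : d ^+ 2 <= lm ^+ 2 by rewrite ler_sqr //; exact: le_trans d1.
have h : 0 <= q * ((lm ^+ 2 - d ^+ 2) * w).
  by apply: mulr_ge0 => //; apply: mulr_ge0; [rewrite subr_ge0 | exact: ltW].
nra.
Qed.

Lemma Dblk_ge D w x : is_diag_mx D -> 0 < w ->
  (w + 1) ^+ 2 * Nn x <= Nn ((w%:M + Dblk D) *m x).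
Proof.
move=> hD hw.
have -> : w%:M + Dblk D = w%:M + 1 *: Dblk D by rewrite scale1r.
rewrite Nn_Dblk // Nn_split mulr_sumr; apply: ler_sum => i _.
by rewrite ler_wpM2r ?addr_ge0 ?sqr_ge0 // expr1n mul1r lerDl sqr_ge0.
Qed.

Lemma lmax_bound D i : (forall j, 0 <= D j j) -> 0 <= D i i <= lambda_max D.
Proof.
move=> h; rewrite h /=; exact: (le_bigmax 0 (fun j => D j j) i).
Qed.

End Dineq.
Section Blocks.
Variable R : realType.

Lemma unit_of_inj m (A : 'M[R]_m) :
  (forall x : 'cV[R]_m, A *m x = 0 -> x = 0) -> A \in unitmx.
Proof.
move=> h; rewrite -unitmx_tr -row_free_unit -kermx_eq0.
set K := kermx A^T.
have hK : A *m K^T = 0.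
  by rewrite -[A]trmxK -trmx_mul mulmx_ker trmx0.
apply/eqP/matrixP => i j; rewrite mxE.
have := h (col i K^T); rewrite colE mulmxA hK mul0mx => /(_ erefl).
by move/matrixP/(_ j 0); rewrite -colE !mxE.
Qed.

Variable n : nat.
Implicit Types (D T : 'M[R]_n) (x : 'cV[R]_(n + n)).

Lemma Tblk_skew T : T^T = T -> (Tblk T)^T = - Tblk T.
Proof.
by move=> hT; rewrite /Tblk tr_block_mx opp_block_mx !trmx0 !oppr0 linearN /= hT opprK.
Qed.

Lemma diag_sym D : is_diag_mx D -> D^T = D.
Proof. by case/diag_mxP => d ->; rewrite tr_diag_mx. Qed.

Lemma Rblk_split T D : Rblk T D = Tblk T + Dblk D.
Proof.
rewrite /Rblk /Tblk /Dblk add_block_mx !add0r; congr block_mx;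
  by rewrite addrC.
Qed.

Lemma Rblk_skew T D : T^T = T -> is_diag_mx D ->
  Rblk T D = 1%:M + block_mx 0 (T - D) (D - T) 0 /\
  (block_mx 0 (T - D) (D - T) 0)^T = - block_mx 0 (T - D) (D - T) 0.
Proof.
move=> hT hD; split.
  by rewrite /Rblk scalar_mx_block add_block_mx !addr0 !add0r.
rewrite tr_block_mx opp_block_mx !trmx0 !oppr0 !linearB /= hT diag_sym //.
by congr block_mx; rewrite opprK addrC.
Qed.

Lemma Nn_wT T w u : T^T = T ->
  Nn ((w%:M - Tblk T) *m u) = Nn ((w%:M + Tblk T) *m u).
Proof.
move=> hT; have hS := Tblk_skew hT.
have hS' : (- Tblk T)^T = - - Tblk T by rewrite linearN /= hS.
by rewrite (Nn_skew w u hS) (Nn_skew w u hS') mulNmx Nn_N.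
Qed.

Lemma unit_wT T w : T^T = T -> 0 < w -> (w%:M + Tblk T) \in unitmx.
Proof.
move=> hT hw; apply: unit_of_inj => x hx.
have := Nn_skew w x (Tblk_skew hT); rewrite hx.
have -> : Nn (0 : 'cV[R]_(n+n)) = 0 by rewrite /Nn big1 // => i _; rewrite mxE expr0n.
move=> h; apply: Nn_eq0.
have := Nn_ge0 x; have := Nn_ge0 (Tblk T *m x); have : 0 < w ^+ 2 by rewrite exprn_gt0.
nra.
Qed.

Lemma unit_wD D w : is_diag_mx D -> 0 < w -> (w%:M + Dblk D) \in unitmx.
Proof.
move=> hD hw; apply: unit_of_inj => x hx.
have := Dblk_ge x hD hw; rewrite hx.
have -> : Nn (0 : 'cV[R]_(n+n)) = 0 by rewrite /Nn big1 // => i _; rewrite mxE expr0n.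
move=> h; apply: Nn_eq0.
have := Nn_ge0 x; have : 0 < (w + 1) ^+ 2 by rewrite exprn_gt0 // addr_gt0.
nra.
Qed.

Lemma unit_R T D : T^T = T -> is_diag_mx D -> Rblk T D \in unitmx.
Proof.
move=> hT hD; case: (Rblk_skew hT hD) => -> hS; apply: unit_of_inj => x hx.
have := Nn_skew 1 x hS; rewrite hx.
have -> : Nn (0 : 'cV[R]_(n+n)) = 0 by rewrite /Nn big1 // => i _; rewrite mxE expr0n.
move=> h; apply: Nn_eq0.
have := Nn_ge0 x; have := Nn_ge0 (block_mx 0 (T - D) (D - T) 0 *m x).
rewrite expr1n mul1r in h; lra.
Qed.

Lemma commT T w : (w%:M - Tblk T) *m (w%:M + Tblk T) = (w%:M + Tblk T) *m (w%:M - Tblk T).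
Proof.
have cw : forall A : 'M[R]_(n+n), GRing.comm w%:M A.
  by move=> A; rewrite /GRing.comm -!mulmxE scalar_mxC.
rewrite mulmxE; apply: commrD; apply: commr_sym; apply: commrB => //.
exact: commr_sym.
Qed.

Lemma L_ident T D w : T^T = T -> is_diag_mx D -> 0 < w ->
  (w%:M + Dblk D) *m Lmat T D w =
  (w%:M - Tblk T) *m invmx (w%:M + Tblk T) *m (w%:M - Dblk D).
Proof.
move=> hT hD hw.
have uA := unit_wT hT hw; have uB := unit_wD hD hw.
have uc : (2 * w)^-1 \is a GRing.unit by rewrite unitfE invr_eq0 mulf_neq0 // gt_eqF.
have uF : Fmat T D w \in unitmx by rewrite /Fmat unitmxZ // unitmx_mul uA uB.
have h1 : Fmat T D w *m Lmat T D w = Gmat T D w by rewrite /Lmat mulKVmx.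
move: h1; rewrite /Fmat /Gmat -scalemxAl => /(congr1 (fun M => (2 * w) *: M)).
rewrite !scalerA mulfV ?mulf_neq0 ?gt_eqF // !scale1r => h2.
have h3 : (w%:M + Dblk D) *m Lmat T D w =
   invmx (w%:M + Tblk T) *m (w%:M - Tblk T) *m (w%:M - Dblk D).
  by rewrite -mulmxA -h2 -mulmxA mulKmx.
rewrite h3; congr (_ *m _).
rewrite -{1}(mulmxK uA (invmx _ *m _)).
by rewrite -[_ *m _ *m (w%:M + Tblk T)]mulmxA commT mulmxA -[invmx _ *m _ *m _]mulmxA mulKmx.
Qed.

End Blocks.
Section Conv.
Variable R : realType.
Variable n : nat.
Implicit Types (D T : 'M[R]_n) (x : 'cV[R]_(n + n)).

Lemma step_diff T D w f x y :
  tban_step T D w f x - tban_step T D w f y =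
  invmx (w%:M + Dblk D) *m ((w%:M - Tblk T) *m (invmx (w%:M + Tblk T) *m
     ((w%:M - Dblk D) *m (x - y)))).
Proof.
rewrite /tban_step /tban_half -mulmxBr; congr (_ *m _).
rewrite opprD addrACA subrr addr0 -mulmxBr; congr (_ *m _).
rewrite -mulmxBr; congr (_ *m _).
by rewrite opprD addrACA subrr addr0 -mulmxBr.
Qed.

Lemma step_fix T D w f xs : T^T = T -> is_diag_mx D -> 0 < w ->
  Rblk T D *m xs = f -> tban_step T D w f xs = xs.
Proof.
move=> hT hD hw hf.
have uA := unit_wT hT hw; have uB := unit_wD hD hw.
have hh : tban_half T D w f xs = xs.
  rewrite /tban_half -hf Rblk_split -mulmxDl addrCA addrNK addrC.
  by rewrite mulKmx.
rewrite /tban_step hh -hf Rblk_split -mulmxDl addrA addrNK.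
by rewrite mulKmx.
Qed.

Lemma sigma_lt1 (lm w : R) : 0 < w -> sigma lm w < 1.
Proof.
move=> hw; rewrite /sigma -[X in _ < X]sqrtr1 ltr_sqrt ?ltr01 //.
have B0 : 0 < (w + 1) ^+ 2 + lm ^+ 2 by have := sqr_ge0 lm; nra.
rewrite ltr_pdivrMr // mul1r; nra.
Qed.

Lemma sigma_ge0 (lm w : R) : 0 <= sigma lm w.
Proof. exact: sqrtr_ge0. Qed.

Lemma sigma_sq (lm w : R) : 0 < w -> sigma lm w ^+ 2 = s2 lm w.
Proof.
move=> hw; rewrite /sigma sqr_sqrtr // /s2 divr_ge0 //.
  by rewrite addr_ge0 ?sqr_ge0.
by rewrite addr_ge0 ?sqr_ge0.
Qed.

Lemma conv T D w f x0 xs : T^T = T -> is_diag_mx D -> (forall i, 0 <= D i i) ->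
  0 < w -> Rblk T D *m xs = f -> tban_seq T D w f x0 @ \oo --> xs.
Proof.
move=> hT hD hDp hw hf.
have uA := unit_wT hT hw; have uB := unit_wD hD hw.
set lm := lambda_max D.
set e := fun k => tban_seq T D w f x0 k - xs.
set g := fun k => (w%:M + Dblk D) *m e k.
have hb : forall i, 0 <= D i i <= lm by move=> i; exact: lmax_bound.
have rec : forall k, Nn (g k.+1) <= s2 lm w * Nn (g k).
  move=> k; rewrite /g /e /tban_seq iterS -{1}(step_fix hT hD hw hf) step_diff.
  rewrite mulKVmx // Nn_wT // mulKVmx //; exact: Dblk_le.
have geo : forall k, Nn (g k) <= s2 lm w ^+ k * Nn (g 0%N).
  elim=> [|k IH]; first by rewrite expr0 mul1r.
  apply: (le_trans (rec k)); rewrite exprS -mulrA ler_wpM2l //.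
  by rewrite -sigma_sq // sqr_ge0.
set s := sigma lm w; set c := Num.sqrt (Nn (g 0%N)) / (w + 1).
have c0 : 0 <= c by rewrite divr_ge0 ?sqrtr_ge0 // addr_ge0 // ltW.
have bnd : forall k i, `|e k i 0| <= s ^+ k * c.
  move=> k i.
  have w1 : 0 < (w + 1) ^+ 2 by rewrite exprn_gt0 // addr_gt0.
  have h1 := Dblk_ge (e k) hD hw.
  have h2 := Nn_coord (e k) i.
  have h3 : e k i 0 ^+ 2 <= (s ^+ k * c) ^+ 2.
    have -> : (s ^+ k * c) ^+ 2 = s2 lm w ^+ k * Nn (g 0%N) / (w + 1) ^+ 2.
      by rewrite exprMn -exprM mulnC exprM sigma_sq // /c !expr_div_n sqr_sqrtr ?Nn_ge0 // !mulrA.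
    rewrite ler_pdivlMr //.
    apply: le_trans (geo k); apply: le_trans h1.
    by rewrite mulrC ler_wpM2l // ltW.
  have hc : 0 <= s ^+ k * c by rewrite mulr_ge0 ?exprn_ge0 ?sigma_ge0.
  rewrite -ler_sqr ?nnegrE ?normr_ge0 //.
  by rewrite real_normK // num_real.
apply/cvgrPdist_le => eps eps0.
have s1 : `|s| < 1 by rewrite ger0_norm ?sigma_ge0 // sigma_lt1.
have := cvg_expr s1; move/cvgrPdist_le/(_ (eps / (c + 1))).
have ec : 0 < eps / (c + 1) by rewrite divr_gt0 // ltr_wpDl.
move=> /(_ ec); apply: filterS => k hk.
rewrite sub0r normrN ger0_norm ?exprn_ge0 ?sigma_ge0 // in hk.
have : `|xs - tban_seq T D w f x0 k| <= s ^+ k * c.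
  rewrite -normrN opprB [X in X <= _]mx_normrE.
  apply: bigmax_le => [|[i j] _]; first by rewrite mulr_ge0 ?exprn_ge0 ?sigma_ge0.
  by rewrite (ord1 j) /=; exact: bnd.
move=> h; apply: (le_trans h).
have : s ^+ k * c <= eps / (c + 1) * c by rewrite ler_wpM2r.
move=> h'; apply: (le_trans h'); rewrite mulrAC ler_pdivrMr ?ltr_wpDl //.
by rewrite ler_wpM2l ?ltW // ltrDl.
Qed.

End Conv.
Section Cplx.
Variable R : realType.
Local Notation C := R[i].

Definition cx m p (A : 'M[R]_(m, p)) : 'M[C]_(m, p) := map_mx (fun r : R => (r%:C)%C) A.
Definition rem m p (A : 'M[C]_(m, p)) : 'M[R]_(m, p) := map_mx (@complex.Re R) A.
Definition imm m p (A : 'M[C]_(m, p)) : 'M[R]_(m, p) := map_mx (@complex.Im R) A.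

Lemma decomp m p (z : 'M[C]_(m, p)) : z = cx (rem z) + 'i%C *: cx (imm z).
Proof.
apply/matrixP => i j; rewrite !mxE; exact: complexE.

Qed.

Lemma rem_d m p (P Q : 'M[R]_(m, p)) : rem (cx P + 'i%C *: cx Q) = P.
Proof. apply/matrixP => i j; rewrite !mxE; by simpc. Qed.

Lemma imm_d m p (P Q : 'M[R]_(m, p)) : imm (cx P + 'i%C *: cx Q) = Q.
Proof. by apply/matrixP => i j; rewrite !mxE; simpc. Qed.

Lemma cx_mul m p q (A : 'M[R]_(m, p)) (B : 'M[R]_(p, q)) : cx (A *m B) = cx A *m cx B.
Proof. exact: map_mxM. Qed.

Definition Nc m (z : 'cV[C]_m) := Nn (rem z) + Nn (imm z).

Lemma Nc_cx m p (A : 'M[R]_(p, m)) (z : 'cV[C]_m) :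
  Nc (cx A *m z) = Nn (A *m rem z) + Nn (A *m imm z).
Proof.
by rewrite {1}(decomp z) mulmxDr -scalemxAr -!cx_mul /Nc rem_d imm_d.
Qed.

Lemma Nc_scale m (l : C) (z : 'cV[C]_m) :
  Nc (l *: z) = (complex.Re l ^+ 2 + complex.Im l ^+ 2) * Nc z.
Proof.
rewrite /Nc /Nn -big_split /= -big_split mulr_sumr.
apply: eq_bigr => i _ /=.
rewrite !mxE; case: l => a b; case: (z i 0) => c d; simpc; rewrite /=; ring.
Qed.

Lemma Nc_ge0 m (z : 'cV[C]_m) : 0 <= Nc z.
Proof. by rewrite /Nc addr_ge0 ?Nn_ge0. Qed.

Lemma Nc_eq0 m (z : 'cV[C]_m) : Nc z = 0 -> z = 0.
Proof.
move=> h; have h1 := Nn_ge0 (rem z); have h2 := Nn_ge0 (imm z).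
rewrite /Nc in h.
have e1 : rem z = 0 by apply: Nn_eq0; lra.
have e2 : imm z = 0 by apply: Nn_eq0; lra.
by rewrite (decomp z) e1 e2 /cx !map_mx0 scaler0 addr0.
Qed.

Lemma eig_col (F : fieldType) m (A : 'M[F]_m) a : eigenvalue A a ->
  exists2 z : 'cV[F]_m, A *m z = a *: z & z != 0.
Proof.
move=> h.
have h' : eigenvalue A^T a.
  move: h; rewrite /eigenvalue /eigenspace !kermx_eq0 !row_free_unit.
  by rewrite -unitmx_tr linearB /= tr_scalar_mx.
case/eigenvalueP: h' => v hv v0; exists v^T; last by rewrite trmx_eq0.
by rewrite -[A]trmxK -trmx_mul hv linearZ.
Qed.

End Cplx.
Section Spec.
Variable R : realType.
Variable n : nat.

Lemma spec_bound (T D : 'M[R]_n) w : T^T = T -> is_diag_mx D -> (forall i, 0 <= D i i) ->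
  0 < w -> spectral_radius (Lmat T D w) <= sigma (lambda_max D) w.
Proof.
move=> hT hD hDp hw.
have uA := unit_wT hT hw; have uB := unit_wD hD hw.
have hb : forall i, 0 <= D i i <= lambda_max D by move=> i; exact: lmax_bound.
rewrite /spectral_radius.
set S := _ @` _.
case: (pselect (S !=set0)) => [ne|emp]; last first.
  have -> : S = set0.
    by apply/seteqP; split => x // Sx; exfalso; apply: emp; exists x.
  by rewrite sup0 sigma_ge0.
apply: ge_sup => // _ [l hl <-].
case: (eig_col hl) => z hz z0.
change (cx (Lmat T D w) *m z = l *: z) in hz.
set y := cx (w%:M + Dblk D) *m z.
have key : (complex.Re l ^+ 2 + complex.Im l ^+ 2) * Nc y <= s2 (lambda_max D) w * Nc y.
  rewrite -Nc_scale.
  have -> : l *: y = cx ((w%:M + Dblk D) *m Lmat T D w) *m z.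
    by rewrite cx_mul -mulmxA hz scalemxAr.
  rewrite L_ident // !cx_mul -!mulmxA Nc_cx.
  set u := cx (invmx (w%:M + Tblk T)) *m (cx (w%:M - Dblk D) *m z).
  rewrite !Nn_wT // -Nc_cx /u mulmxA -cx_mul mulmxV // /cx map_mx1 mul1mx.
  rewrite -/(cx _) Nc_cx /y Nc_cx mulrDr.
  by apply: lerD; apply: Dblk_le.
have zpos : 0 < Nc z.
  rewrite lt_def Nc_ge0 andbT; apply/eqP => h; move/negP: z0; apply.
  by rewrite (Nc_eq0 h).
have ypos : 0 < Nc y.
  apply: (lt_le_trans (y := (w + 1) ^+ 2 * Nc z)).
    by rewrite mulr_gt0 // exprn_gt0 // addr_gt0.
  rewrite /y Nc_cx /Nc mulrDr; apply: lerD; exact: Dblk_ge.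
rewrite ler_pM2r // in key.
rewrite /sigma -/(s2 _ _); move: key; clear -hw; case: l => a b /= key.
exact: ler_wsqrtr.
Qed.

End Spec.

Theorem theorem1 (R : realType) (n : nat) (Td Dd : 'M[R]_n) :
  (0 < n)%N ->
  spd Td ->
  is_diag_mx Dd ->
  (forall i : 'I_n, 0 <= Dd i i) ->
  (* the linear system has a unique solution for every right-hand side *)
  (forall f : 'cV[R]_(n + n), exists! xs : 'cV[R]_(n + n), Rblk Td Dd *m xs = f) /\
  (forall w : R, 0 < w ->
     (* the TBAN iteration is well defined *)
     (w%:M + Tblk Td) \in unitmx /\ (w%:M + Dblk Dd) \in unitmx /\
     (* it converges to the solution for every f and every initial vector *)
     (forall (f x0 : 'cV[R]_(n + n)) (xs : 'cV[R]_(n + n)),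
        Rblk Td Dd *m xs = f -> tban_seq Td Dd w f x0 @ \oo --> xs) /\
     (* spectral radius bound *)
     spectral_radius (Lmat Td Dd w) <= sigma (lambda_max Dd) w /\
     sigma (lambda_max Dd) w < 1).
Proof.
move=> _ [hT _] hD hDp; split.
  move=> f; have uR := unit_R hT hD.
  exists (invmx (Rblk Td Dd) *m f); split; first by rewrite mulKVmx.
  by move=> y hy; rewrite -hy mulKmx.
move=> w hw; split; first exact: unit_wT.
split; first exact: unit_wD.
split; first by move=> f x0 xs hf; exact: conv.
split; first exact: spec_bound.
exact: sigma_lt1.
Qed.
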